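(* For any discrete random variables $U,V$, where $U$ has finite support $\mathcal{U}$, and any $\alpha>0$, $$\Pr\left(|h(V|U)-h(V)|>\alpha\right)<(|\mathcal{U}|+1)2^{-\alpha}.$$
   Context: $h(V|U)=-\log_2 p_{V|U}(V|U)$ and $h(V)=-\log_2 p_V(V)$ (random variables). *)

(* Defs.v *)
From HB Require Import structures.
From mathcomp Require Import all_boot all_order all_algebra.
From mathcomp Require Import all_classical all_reals all_analysis.
Set Implicit Arguments. Unset Strict Implicit. Unset Printing Implicit Defensive.
Import Order.TTheory GRing.Theory Num.Theory.
Local Open Scope classical_set_scope.
Local Open Scope ring_scope.

(* The pair (U,V) of discrete random variables is described by its joint
   probability mass function p u v = Pr(U = u, V = v); U takes values in a
   finite type, V in a countable type. *)
Section InfoDensity.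
Variables (R : realType) (U : finType) (V : countType).

Definition is_joint_pmf (p : U -> V -> R) : Prop :=
  (forall u v, 0 <= p u v) /\
  (\esum_(x in [set: U * V]) (p x.1 x.2)%:E = 1)%E.

Definition Pr (p : U -> V -> R) (E : set (U * V)) : \bar R :=
  \esum_(x in E) (p x.1 x.2)%:E.

Definition pU (p : U -> V -> R) (u : U) : R := fine (\esum_(v in [set: V]) (p u v)%:E).
Definition pV (p : U -> V -> R) (v : V) : R := \sum_(u : U) p u v.

Definition pVgU (p : U -> V -> R) (v : V) (u : U) : R := p u v / pU p u.

Definition log2 (x : R) : R := ln x / ln 2.

Definition hVgU (p : U -> V -> R) (u : U) (v : V) : R := - log2 (pVgU p v u).
Definition hV (p : U -> V -> R) (v : V) : R := - log2 (pV p v).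

Definition suppU (p : U -> V -> R) : {set U} := [set u | 0 < pU p u].
End InfoDensity.

(* Main.v *)
Require Import Defs.
From HB Require Import structures.
From mathcomp Require Import all_boot all_order all_algebra.
From mathcomp Require Import all_classical all_reals all_analysis.
From mathcomp Require Import ring lra.
Import Order.TTheory GRing.Theory Num.Theory.
Local Open Scope classical_set_scope.
Local Open Scope ring_scope.

Lemma esumZ_ (R : realType) (T : choiceType) (S : set T) (r : R) (a : T -> \bar R) :
  0 <= r -> (forall x, (0 <= a x)%E) ->
  \esum_(i in S) (r%:E * a i)%E = (r%:E * \esum_(i in S) a i)%E.
Proof.
move=> r0 a0; rewrite /esum -ereal_supZl//; last first.
  by apply/set0P; exists 0%E; exists set0; [exact: fsets_set0|rewrite fsbig_set0].
congr ereal_sup; apply/seteqP; split.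
  move=> _ [X XS <-]; exists (\sum_(i \in X) a i)%E; first by exists X.
  by rewrite ge0_mule_fsumr.
move=> _ [_ [X XS <-] <-]; exists X => //; by rewrite ge0_mule_fsumr.
Qed.

Lemma esum_finT (R : realType) (U : finType) (f : U -> \bar R) :
  (forall u, (0 <= f u)%E) -> \esum_(u in [set: U]) f u = \sum_(u : U) f u.
Proof.
move=> f0; rewrite esum_fset//; last exact: finite_finset.
rewrite (fsbigE (enum U)) ?enum_uniq//; last by move=> i _; rewrite mem_enum.
rewrite big_enum_cond; apply: eq_bigl => i; by rewrite in_setT.
Qed.

Lemma setXTT_ (U V : Type) : [set: U] `*`` (fun _ => [set: V]) = [set: U * V].
Proof. by apply/seteqP; split => x. Qed.

Theorem lemma30 (R : realType) (U : finType) (V : countType)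
  (p : U -> V -> R) (alpha : R) :
  is_joint_pmf p -> 0 < alpha ->
  (Pr p [set x | (alpha < `| hVgU p x.1 x.2 - hV p x.2 |)%R]
   < ((#|suppU p|.+1)%:R * (2 : R) `^ (- alpha))%R%:E)%E.
Proof.
move=> [p0 tot] a0.
set c := (2 : R) `^ (- alpha).
have c0 : 0 < c by rewrite powR_gt0.
have EU u : \esum_(v in [set: V]) (p u v)%:E = (pU p u)%:E.
  have le1 : (\esum_(v in [set: V]) (p u v)%:E <= 1)%E.
    rewrite -tot.
    have -> : \esum_(v in [set: V]) (p u v)%:E =
        \esum_(x in [set u] `*`` (fun _ => [set: V])) (p x.1 x.2)%:E.
      rewrite -(esum_esum (a := fun u v => (p u v)%:E)) ?esum_set1 //; last by move=> *; rewrite lee_fin.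
      by apply: esum_ge0 => *; rewrite lee_fin.
    rewrite [leRHS]esum_mkcond [leLHS]esum_mkcond; apply: le_esum => x _.
    rewrite in_setT; case: ifP => // _; by rewrite lee_fin.
  rewrite /pU fineK // ge0_fin_numE ?(le_lt_trans le1) ?ltry //.
  by apply: esum_ge0 => *; rewrite lee_fin.
have pU0 u : 0 <= pU p u by rewrite -lee_fin -EU; apply: esum_ge0 => *; rewrite lee_fin.
have sumU : \sum_(u : U) pU p u = 1.
  have : (\sum_(u : U) pU p u)%:E = 1%:E.
    rewrite -sumEFin -esum_finT; last by move=> u; rewrite lee_fin.
    under eq_esum do rewrite -EU.
    rewrite (esum_esum (a := fun u v => (p u v)%:E)); last by move=> *; rewrite lee_fin.
    by rewrite setXTT_.
  by move=> [].
have sumV : \esum_(v in [set: V]) (pV p v)%:E = 1%E.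
  under eq_esum do rewrite /pV -sumEFin.
  rewrite esum_sum; last by move=> *; rewrite lee_fin.
  under eq_bigr do rewrite EU.
  by rewrite sumEFin sumU.
have le_pU u v : p u v <= pU p u.
  rewrite -lee_fin -EU; apply: esum_ge; exists [set v].
    by split; [exact: finite_set1| by move=> ? _].
  by rewrite fsbig_set1.
have le_pV u v : p u v <= pV p v.
  by rewrite /pV (bigD1 u) //= lerDl sumr_ge0.
have key u v : p u v != 0 -> alpha < `|hVgU p u v - hV p v| ->
    p u v < c * (pU p u * pV p v + pVgU p v u).
  move=> puv; have ppos : 0 < p u v by rewrite lt0r puv p0.
  have pUp : 0 < pU p u := lt_le_trans ppos (le_pU u v).
  have pVp : 0 < pV p v := lt_le_trans ppos (le_pV u v).
  have pE : p u v = pVgU p v u * pU p u by rewrite /pVgU divfK // gt_eqF.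
  have ap : 0 < pVgU p v u by rewrite /pVgU divr_gt0.
  move: pE ap (le_pV u v) pVp; rewrite /hVgU /hV /log2.
  set a := pVgU p v u; set b := pV p v => pE ap pb pVp.
  have L0 : 0 < ln (2:R) by rewrite ln_gt0 // ltr1n.
  have cE : c = expR (- (alpha * ln 2)).
    by rewrite /c /powR pnatr_eq0 /= mulNr.
  have -> : - (ln a / ln 2) - - (ln b / ln 2) = (ln b - ln a) / ln 2 by ring.
  rewrite ltr_normr => /orP[h|h].
    move: h; rewrite ltr_pdivlMr // => h.
    have : a < b * c.
      rewrite cE -[a]lnK ?posrE // -[b]lnK ?posrE // -expRD ltr_expR; lra.
    move=> abc; rewrite pE; nra.
  move: h; rewrite -mulNr ltr_pdivlMr // => h.
  have : b < a * c.
    rewrite cE -[a]lnK ?posrE // -[b]lnK ?posrE // -expRD ltr_expR; lra.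
  move=> bac; have : 0 < c * pU p u * b by rewrite !mulr_gt0.
  nra.
have pV0 v : 0 <= pV p v by rewrite /pV sumr_ge0.
have pVgU0 u v : 0 <= pVgU p v u by rewrite /pVgU divr_ge0.
have inner u : \esum_(v in [set: V]) (c * (pU p u * pV p v + pVgU p v u))%:E =
    (c * (pU p u + (pU p u)^-1 * pU p u))%:E.
  transitivity (\esum_(v in [set: V]) (c%:E * ((pU p u)%:E * (pV p v)%:E
       + ((pU p u)^-1)%:E * (p u v)%:E)))%E.
    by apply: eq_esum => v _; rewrite -!EFinM /pVgU (mulrC (p u v)).
  rewrite esumZ_ ?ltW //; last by move=> v; rewrite -!EFinM -EFinD lee_fin addr_ge0 // mulr_ge0 // invr_ge0.
  rewrite esumD //; [|by move=> v _; rewrite -EFinM lee_fin mulr_ge0|by move=> v _; rewrite -EFinM lee_fin mulr_ge0 // invr_ge0].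
  rewrite esumZ_; [|exact: pU0|by move=> v; rewrite lee_fin].
  rewrite esumZ_; [|by rewrite invr_ge0|by move=> v; rewrite lee_fin].
  by rewrite sumV EU mule1 -!EFinM.
have cardS : \sum_(u : U) (pU p u)^-1 * pU p u = #|suppU p|%:R.
  rewrite (eq_bigr (fun u => if u \in suppU p then 1 else 0)); last first.
    move=> u _; rewrite inE; have [h|h] := eqVneq (pU p u) 0.
      by rewrite h invr0 mul0r ltxx.
    by rewrite mulVf // lt0r h pU0.
  by rewrite -big_mkcond sumr_const.
have totg : \esum_(x in [set: U * V]) (c * (pU p x.1 * pV p x.2 + pVgU p x.2 x.1))%:E
    = (c * (1 + #|suppU p|%:R))%:E.
  rewrite -setXTT_ -(esum_esum (a := fun u v => (c * (pU p u * pV p v + pVgU p v u))%:E)); last first.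
    move=> i j _ _; rewrite lee_fin; apply: mulr_ge0; [exact: ltW|apply: addr_ge0; [exact: mulr_ge0|exact: pVgU0]].
  under eq_esum do rewrite inner.
  rewrite esum_finT; last by move=> u; rewrite lee_fin; apply: mulr_ge0; [exact: ltW|apply: addr_ge0; [exact: pU0|apply: mulr_ge0; [rewrite invr_ge0|]; exact: pU0]].
  by rewrite sumEFin -mulr_sumr big_split /= sumU cardS.
rewrite [X in (_ < X)%E](_ : _ = (c * (1 + #|suppU p|%:R))%:E); last first.
  by rewrite -nat1r mulrC.
set A := [set x | _].
set g := fun x : U * V => c * (pU p x.1 * pV p x.2 + pVgU p x.2 x.1).
have g0 x : 0 <= g x.
  by apply: mulr_ge0; [exact: ltW|apply: addr_ge0; [exact: mulr_ge0|exact: pVgU0]].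
have tgt0 : 0 < c * (1 + #|suppU p|%:R) by rewrite mulr_gt0 // ltr_wpDr.
case: (pselect (exists x, A x /\ p x.1 x.2 != 0)) => [[x0 [Ax0 px0]]|H]; last first.
  rewrite /Pr esum1 ?lte_fin // => x Ax.
  case: (eqVneq (p x.1 x.2) 0) => [->//|h]; exfalso; apply: H; by exists x.
have px0lt : p x0.1 x0.2 < g x0 by apply: key.
set d := g x0 - p x0.1 x0.2.
have d0 : 0 < d by rewrite subr_gt0.
set G2 := fun x : U * V => if x == x0 then (p x0.1 x0.2)%:E else (g x)%:E.
have G20 x : (0 <= G2 x)%E by rewrite /G2; case: eqP; rewrite lee_fin.
have spl : ((c * (1 + #|suppU p|%:R))%:E = \esum_(x in [set: U * V]) G2 x + d%:E)%E.
  rewrite -totg -[d%:E](@esum_set1 R _ x0 (fun _ => d%:E)) ?lee_fin ?ltW //.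
  rewrite [X in (_ + X)%E]esum_mkcond -esumD //; last by move=> x _; case: ifP; rewrite // lee_fin ltW.
  apply: eq_esum => x _; rewrite /G2 in_set1; case: eqVneq => [->|_].
    by rewrite -EFinD /d subrKC.
  by rewrite adde0.
have le1 : (Pr p A <= \esum_(x in A) G2 x)%E.
  apply: le_esum => x Ax; rewrite /G2; case: eqVneq => [->//|_].
  rewrite lee_fin; case: (eqVneq (p x.1 x.2) 0) => [->//|h].
  by apply/ltW/key.
have le2 : (\esum_(x in A) G2 x <= \esum_(x in [set: U * V]) G2 x)%E.
  rewrite [leLHS]esum_mkcond; apply: le_esum => x _; by case: ifP.
move: le2 spl; case: (\esum_(x in [set: U * V]) G2 x) => [r| |] le2 spl.
- rewrite spl -EFinD; apply: (le_lt_trans le1); apply: (le_lt_trans le2).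
  by rewrite lte_fin ltrDl.
- by [].
- by [].
Qed.
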